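(* Let $S$ be a $\Gamma$-hemiring, let $\mu$ be a fuzzy right h-ideal of $S$ and let $x \in S$. Then the extension $\langle x,\mu\rangle$ of $\mu$ by $x$ is a fuzzy right h-ideal of $S$.
   Context: A $\Gamma$-hemiring is a pair of additive commutative semigroups with zero $S$ and $\Gamma$ together with a map $S\times\Gamma\times S\to S$, $(a,\alpha,b)\mapsto a\alpha b$, such that for all $a,b,c\in S$ and $\alpha,\beta\in\Gamma$: $(a+b)\alpha c=a\alpha c+b\alpha c$; $a\alpha(b+c)=a\alpha b+a\alpha c$; $a(\alpha+\beta)b=a\alpha b+a\beta b$; $a\alpha(b\beta c)=(a\alpha b)\beta c$; $0\alpha a=0=a\alpha 0$; $a0b=0=b0a$. A fuzzy subset of $S$ is a map $\mu:S\to[0,1]$; it is non-empty if $\mu(x)\neq 0$ for some $x\in S$. A non-empty fuzzy subset $\mu$ is a fuzzy right h-ideal if for all $x,y,a,b,z\in S$ and $\gamma\in\Gamma$: (i) $\mu(x+y)\ge\min\{\mu(x),\mu(y)\}$; (ii) $\mu(x\gamma y)\ge\mu(x)$; (iii) $x+a+z=b+z$ implies $\mu(x)\ge\min\{\mu(a),\mu(b)\}$. For a fuzzy subset $\mu$ of $S$ and $x\in S$, the extension of $\mu$ by $x$ is the fuzzy subset $\langle x,\mu\rangle$ defined by $\langle x,\mu\rangle(y)=\inf_{s\in S,\ \alpha,\gamma\in\Gamma}\mu(x\alpha s\gamma y)$ for $y\in S$. *)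

(* Defs.v *)
From mathcomp Require Import all_boot all_order all_algebra.
From mathcomp Require Import classical_sets reals.

Set Implicit Arguments. Unset Strict Implicit. Unset Printing Implicit Defensive.
Local Open Scope classical_set_scope.
Local Open Scope ring_scope.

Record GammaHemiring := {
  car :> Type;
  gam : Type;
  addS : car -> car -> car;
  zeroS : car;
  addG : gam -> gam -> gam;
  zeroG : gam;
  tmul : car -> gam -> car -> car;
  addSA : forall a b c, addS a (addS b c) = addS (addS a b) c;
  addSC : forall a b, addS a b = addS b a;
  add0S : forall a, addS zeroS a = a;
  addGA : forall a b c, addG a (addG b c) = addG (addG a b) c;
  addGC : forall a b, addG a b = addG b a;
  add0G : forall a, addG zeroG a = a;
  tmulDl : forall a b c al, tmul (addS a b) al c = addS (tmul a al c) (tmul b al c);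
  tmulDr : forall a b c al, tmul a al (addS b c) = addS (tmul a al b) (tmul a al c);
  tmulDm : forall a b al be, tmul a (addG al be) b = addS (tmul a al b) (tmul a be b);
  tmulA : forall a b c al be, tmul a al (tmul b be c) = tmul (tmul a al b) be c;
  tmul0l : forall a al, tmul zeroS al a = zeroS;
  tmul0r : forall a al, tmul a al zeroS = zeroS;
  tmul0m : forall a b, tmul a zeroG b = zeroS /\ tmul b zeroG a = zeroS
}.

Section Fuzzy.
Variables (R : realType) (S : GammaHemiring).

Definition fuzzy_subset (mu : S -> R) : Prop :=
  forall x, 0 <= mu x <= 1.

Definition fuzzy_nonempty (mu : S -> R) : Prop :=
  exists x, mu x != 0.

Definition fuzzy_right_h_ideal (mu : S -> R) : Prop :=
  [/\ fuzzy_subset mu, fuzzy_nonempty mu,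
      (forall x y, mu (addS x y) >= Num.min (mu x) (mu y)),
      (forall x y (g : gam S), mu (tmul x g y) >= mu x) &
      (forall x a b z, addS (addS x a) z = addS b z ->
                         mu x >= Num.min (mu a) (mu b))].

Definition extension (x : S) (mu : S -> R) : S -> R :=
  fun y => inf [set r | exists (s : S) (al ga : gam S),
                          r = mu (tmul (tmul x al s) ga y)].

End Fuzzy.

(* Main.v *)
Require Import Defs.
From mathcomp Require Import all_boot all_order all_algebra.
From mathcomp Require Import classical_sets reals.
Import Order.TTheory GRing.Theory Num.Theory.
Local Open Scope classical_set_scope.
Local Open Scope ring_scope.

Section H.
Variables (R : realType) (S : GammaHemiring) (mu : S -> R) (x : S).
Hypothesis fs : fuzzy_subset mu.

Let E y := [set r : R | exists (s : S) (al ga : gam S),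
                          r = mu (tmul (tmul x al s) ga y)].

Lemma E_ne y : nonempty (E y).
Proof. by exists (mu (tmul (tmul x (zeroG S) x) (zeroG S) y)); exists x, (zeroG S), (zeroG S). Qed.

Lemma E_lb y : has_lbound (E y).
Proof. exists 0 => r [s [al [ga ->]]]; by case/andP: (fs (tmul (tmul x al s) ga y)). Qed.

Lemma ext_le y s al ga : extension x mu y <= mu (tmul (tmul x al s) ga y).
Proof. by apply: (ge_inf (E_lb y)); exists s, al, ga. Qed.

Lemma ext_ge y c : (forall s al ga, c <= mu (tmul (tmul x al s) ga y)) ->
  c <= extension x mu y.
Proof. move=> H; apply: lb_le_inf; first exact: E_ne. by move=> r [s [al [ga ->]]]. Qed.
End H.
Arguments ext_le {R S mu x} fs y s al ga : rename.
Arguments ext_ge {R S mu x} fs y c : rename.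

Theorem theorem3p2 (R : realType) (S : GammaHemiring) (mu : S -> R) (x : S) :
  fuzzy_right_h_ideal mu -> fuzzy_right_h_ideal (extension x mu).
Proof.
case=> fs [y0 Hy0] Hadd Hmul Hh.
have mu0 : mu (zeroS S) = extension x mu (zeroS S).
  apply/eqP; rewrite eq_le; apply/andP; split.
    by apply: ext_ge => // s al ga; rewrite tmul0r.
  by rewrite -{2}(tmul0r (tmul x (zeroG S) x) (zeroG S)); exact: ext_le.
split.
- move=> y; apply/andP; split.
    by apply: ext_ge => // s al ga; case/andP: (fs (tmul (tmul x al s) ga y)).
  apply: le_trans (ext_le fs y x (zeroG S) (zeroG S)) _.
  by case/andP: (fs (tmul (tmul x (zeroG S) x) (zeroG S) y)).
- exists (zeroS S); rewrite -mu0.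
  have h := Hmul y0 y0 (zeroG S); rewrite (proj1 (tmul0m y0 y0)) in h.
  case/andP: (fs y0) => h0 _.
  by apply/eqP => e; move: Hy0; rewrite eq_le h0 andbT -e h.
- move=> y z; apply: ext_ge => // s al ga.
  rewrite tmulDr; apply: le_trans (Hadd _ _).
  by rewrite le_min !ge_min !ext_le ?orbT.
- move=> y z g; apply: ext_ge => // s al ga.
  rewrite tmulA; apply: le_trans (Hmul _ _ _); exact: ext_le.
- move=> y a b z e; apply: ext_ge => // s al ga.
  apply: le_trans (Hh _ (tmul (tmul x al s) ga a) (tmul (tmul x al s) ga b) (tmul (tmul x al s) ga z) _).
    by rewrite le_min !ge_min !ext_le ?orbT.
  by rewrite -!tmulDr e.
Qed.
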